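(* Let $n\ge2$ and let $(1,n,f_2,\dots,f_k)$ with $k\le\lfloor\frac{n-1}2\rfloor$ be a $K$-sequence. Then there is a proper ideal $\Delta\subset B_n$ such that $\mathrm{Bier}(B_n,\Delta)$ has exactly $2n$ vertices and $g_i(\mathrm{Bier}(B_n,\Delta))=f_i$ for $0\le i\le k$ (with $f_0=1,f_1=n$) and $g_i(\mathrm{Bier}(B_n,\Delta))=0$ for $k<i\le\lfloor\frac{n-1}2\rfloor$.
   Context: $B_n$ is the Boolean lattice of subsets of $[1,n]$. A proper ideal $\Delta\subset B_n$ is a nonempty family of subsets of $[1,n]$ closed under taking subsets with $[1,n]\notin\Delta$. The Bier sphere $\mathrm{Bier}(B_n,\Delta)$ is the simplicial complex whose faces are the pairs $(B,C)$ with $B\subsetneq C\subseteq[1,n]$, $B\in\Delta$, $C\notin\Delta$, with $(B',C')$ a face of $(B,C)$ iff $B'\subseteq B$ and $C\subseteq C'$; concretely $(B,C)$ is the vertex set $B\sqcup\{\bar d: d\notin C\}$ on $[1,n]\sqcup\{\bar1,\dots,\bar n\}$, and the face $(B,C)$ has $|B|+n-|C|$ vertices; all facets have $n-1$ vertices. For such a complex $\Gamma$, $f_j(\Gamma)$ is the number of faces with $j$ vertices, $h_i(\Gamma):=\sum_{j=0}^{n-1}(-1)^{i+j}\binom{n-1-j}{n-1-i}f_j(\Gamma)$ ($0\le i\le n-1$; $h_i:=0$ otherwise), and $g_i(\Gamma):=h_i(\Gamma)-h_{i-1}(\Gamma)$. A $K$-sequence is a sequence that is the $f$-vector (numbers of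 faces of each cardinality, starting with the empty face) of some finite simplicial complex. *)

(* Defs.v *)
From mathcomp Require Import all_boot all_order all_algebra.
Set Implicit Arguments. Unset Strict Implicit. Unset Printing Implicit Defensive.
Import GRing.Theory Num.Theory.

(* The Boolean lattice B_n is modelled as {set 'I_n} (subsets of [1,n],
   elements indexed 0..n-1). *)

Definition Bn_proper_ideal (n : nat) (D : {set {set 'I_n}}) : Prop :=
  [/\ D != set0,
      (forall B C : {set 'I_n}, B \subset C -> C \in D -> B \in D)
    & [set: 'I_n] \notin D].

Definition bier_face (n : nat) (D : {set {set 'I_n}})
    (p : {set 'I_n} * {set 'I_n}) : bool :=
  [&& p.1 \proper p.2, p.1 \in D & p.2 \notin D].

Definition bier_nverts (n : nat) (p : {set 'I_n} * {set 'I_n}) : nat :=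
  #|p.1| + (n - #|p.2|).

Definition bier_f (n : nat) (D : {set {set 'I_n}}) (j : nat) : nat :=
  #|[set p : {set 'I_n} * {set 'I_n} | bier_face D p && (bier_nverts p == j)]|.

Definition bier_h (n : nat) (D : {set {set 'I_n}}) (i : nat) : int :=
  if i <= n.-1 then
    (\sum_(0 <= j < n) ((-1) ^+ (i + j) * ('C(n.-1 - j, n.-1 - i))%:Z
                        * (bier_f D j)%:Z))%R
  else 0%R.

Definition bier_g (n : nat) (D : {set {set 'I_n}}) (i : nat) : int :=
  match i with
  | 0 => bier_h D 0
  | i'.+1 => (bier_h D i'.+1 - bier_h D i')%R
  end.

Definition simplicial_complex (m : nat) (K : {set {set 'I_m}}) : Prop :=
  K != set0 /\ (forall A B : {set 'I_m}, A \subset B -> B \in K -> A \in K).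

(* (f 0, f 1, ..., f k) is a K-sequence: it is the f-vector of some finite
   simplicial complex (f i = number of faces of cardinality i for i <= k,
   and there are no faces of cardinality > k). *)
Definition K_sequence (k : nat) (f : nat -> nat) : Prop :=
  exists (m : nat) (K : {set {set 'I_m}}),
    simplicial_complex K /\
    (forall i, i <= k -> #|[set A in K | #|A| == i]| = f i) /\
    (forall A, A \in K -> #|A| <= k).

(* Main.v *)
Require Import Defs.
From mathcomp Require Import all_boot all_order all_algebra.
From mathcomp Require Import zify.
Set Implicit Arguments. Unset Strict Implicit. Unset Printing Implicit Defensive.
Import GRing.Theory Num.Theory.
Open Scope ring_scope.

Lemma subset_binom (R : comRingType) (T : finType) (A : {set T}) (x y : R) :
  \sum_(S : {set T} | S \subset A) x ^+ #|S| * y ^+ (#|A| - #|S|) = (x + y) ^+ #|A|.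
Proof.
rewrite addrC exprDn.
rewrite (partition_big (fun S : {set T} => (inord #|S| : 'I_(#|A|).+1)) xpredT) //=.
apply: eq_bigr => j _.
rewrite (eq_bigr (fun _ => x ^+ j * y ^+ (#|A| - j))); last first.
  move=> S /andP[SA /eqP <-]; rewrite inordK // ltnS subset_leq_card //.
rewrite sumr_const mulrC; congr (_ *+ _).
rewrite -cards_draws; apply: eq_card => S; rewrite !inE unfold_in /=.
case SA: (S \subset A) => //=.
have le := subset_leq_card SA.
have le' : (#|S| < #|A|.+1)%N by rewrite ltnS.
apply/eqP/eqP => [<-|H]; first by rewrite inordK.
by apply: val_inj; rewrite /= inordK.
Qed.

Lemma coef_1subX m r : ((1 - 'X : {poly int}) ^+ m)`_r = (-1) ^+ r *+ 'C(m, r).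
Proof.
rewrite exprDn coef_sum.
rewrite (eq_bigr (fun l : 'I_m.+1 => if (l == r :> nat) then (-1) ^+ r *+ 'C(m, r) else 0)); last first.
  move=> l _; rewrite expr1n mul1r coefMn -scaleN1r exprZn coefZ coefXn eq_sym.
  by case: eqP => [->|_]; rewrite ?mulr1 ?mulr0 ?mul0rn.
rewrite -big_mkcond (big_ord1_eq _ (fun _ => (-1) ^+ r *+ 'C(m, r))) /=.
case: ltnP => // H; rewrite bin_small ?mulr0n //.
Qed.

Section Bier.
Variables (n : nat) (D : {set {set 'I_n}}).

Definition Qp (p : {set 'I_n} * {set 'I_n}) : {poly int} :=
  'X^(#|p.1| + (n - #|p.2|)) * (1 - 'X) ^+ (#|p.2| - #|p.1|).

Lemma card_le_n (A : {set 'I_n}) : (#|A| <= n)%N.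
Proof. by rewrite -[X in (_ <= X)%N]card_ord max_card. Qed.

Lemma sumsup (B : {set 'I_n}) :
  \sum_(C : {set 'I_n} | B \subset C) Qp (B, C) = 'X^#|B|.
Proof.
rewrite (reindex_inj (@setC_inj _)) /=.
rewrite (eq_bigl (fun S : {set 'I_n} => S \subset ~: B)); last by move=> S; rewrite subsetC.
have cC : forall S : {set 'I_n}, #|~: S| = (n - #|S|)%N.
  by move=> S; rewrite cardsCs setCK card_ord.
rewrite (eq_bigr (fun S : {set 'I_n} => 'X^#|B| * ('X ^+ #|S| * (1 - 'X) ^+ (#|~: B| - #|S|)))); last first.
  move=> S _; rewrite /Qp /= !cC.
  have h1 := card_le_n S.
  have -> : (n - (n - #|S|))%N = #|S| by lia.
  have -> : (n - #|S| - #|B|)%N = (n - #|B| - #|S|)%N by lia.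
  by rewrite exprD mulrA.
by rewrite -mulr_sumr subset_binom addrC subrK expr1n mulr1.
Qed.

Lemma sumsub (C : {set 'I_n}) :
  \sum_(B : {set 'I_n} | B \subset C) Qp (B, C) = 'X^(n - #|C|).
Proof.
rewrite (eq_bigr (fun B : {set 'I_n} => 'X^(n - #|C|) * ('X ^+ #|B| * (1 - 'X) ^+ (#|C| - #|B|)))); last first.
  by move=> B _; rewrite /Qp /= exprD mulrA [X in X * _]mulrC.
by rewrite -mulr_sumr subset_binom addrC subrK expr1n mulr1.
Qed.


Definition term (v : nat) : {poly int} := 'X^v * (1 - 'X) ^+ (n.-1 - v).

Lemma face_lt p : bier_face D p -> (bier_nverts p < n)%N.
Proof.
case/andP => pr _; have := proper_card pr; have := card_le_n p.2.
rewrite /bier_nverts; lia.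
Qed.

Lemma coef_term i v : (i <= n.-1)%N -> (v < n)%N ->
  (term v)`_i = (-1) ^+ (i + v) * ('C(n.-1 - v, n.-1 - i))%:Z.
Proof.
move=> hi hv; rewrite /term coefXnM coef_1subX.
case: ltnP => iv.
  by rewrite bin_small ?mulr0 //; lia.
have -> : (n.-1 - i = (n.-1 - v) - (i - v))%N by lia.
rewrite bin_sub; last by lia.
have -> : (i + v = (i - v) + 2 * v)%N by lia.
by rewrite exprD exprM sqrrN !expr1n mulr1 -natz mulr_natr.
Qed.

Lemma h_coef i : (i <= n.-1)%N ->
  bier_h D i = (\sum_(p | bier_face D p) term (bier_nverts p))`_i.
Proof.
move=> hi; rewrite /bier_h hi big_mkord coef_sum.
set c := fun j : nat => (-1) ^+ (i + j) * ('C(n.-1 - j, n.-1 - i))%:Z.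
transitivity (\sum_(p | bier_face D p) c (bier_nverts p)); last first.
  by apply: eq_bigr => p /face_lt lt; rewrite coef_term.
rewrite [RHS](eq_bigr (fun p => \sum_(j < n | j == bier_nverts p :> nat) c (bier_nverts p))); last first.
  by move=> p /face_lt lt; rewrite (big_ord1_eq _ (fun _ => c (bier_nverts p))) lt.
rewrite (exchange_big_dep xpredT) //=.
apply: eq_bigr => j _.
rewrite (eq_bigr (fun _ => c j)); last by move=> p /andP[_ /eqP ->].
rewrite sumr_const.
have -> : bier_f D j = #|[pred p | bier_face D p && (j == bier_nverts p :> nat)]|.
  by rewrite /bier_f; apply: eq_card => p; rewrite !inE eq_sym.
set m := #|_|; by rewrite -[Posz m]natz mulr_natr.
Qed.

Lemma g_coef i : (i <= n.-1)%N ->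
  bier_g D i = (\sum_(p | bier_face D p) Qp p)`_i.
Proof.
move=> hi.
have -> : \sum_(p | bier_face D p) Qp p =
   (1 - 'X) * \sum_(p | bier_face D p) term (bier_nverts p).
  rewrite mulr_sumr; apply: eq_bigr => p fp.
  have lt := face_lt fp; move: fp => /andP[pr _].
  have := proper_card pr; have := card_le_n p.2 => h1 h2.
  rewrite /Qp /term /bier_nverts mulrCA -exprS.
  congr (_ * _ ^+ _).
  move: h1 h2; set b := #|p.1|; set c := #|p.2|; move=> h1 h2.
  clearbody b c; clear lt pr; rewrite -subn1; lia.
rewrite mulrBl mul1r coefB coefXM.
case: i hi => [|i] hi /=; first by rewrite subr0 h_coef.
by rewrite !h_coef //; lia.
Qed.

Hypothesis Dclosed : forall B C : {set 'I_n}, B \subset C -> C \in D -> B \in D.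

Lemma face_decomp :
  \sum_(p | bier_face D p) Qp p =
  \sum_(B in D) 'X^#|B| - \sum_(C in D) 'X^(n - #|C|).
Proof.
have E1 : \sum_(B in D) 'X^#|B| = \sum_(p : {set 'I_n} * {set 'I_n} | (p.1 \in D) && (p.1 \subset p.2)) Qp p.
  rewrite -(pair_big_dep (fun B : {set 'I_n} => B \in D) (fun B C : {set 'I_n} => B \subset C) (fun B C => Qp (B, C))).
  by apply: eq_bigr => B _; rewrite sumsup.
have E2 : \sum_(C in D) 'X^(n - #|C|) = \sum_(p : {set 'I_n} * {set 'I_n} | (p.1 \in D) && (p.1 \subset p.2) && (p.2 \in D)) Qp p.
  rewrite (eq_bigr (fun C : {set 'I_n} => \sum_(B : {set 'I_n} | B \subset C) Qp (B, C))); last by move=> C _; rewrite sumsub.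
  rewrite (exchange_big_dep xpredT) //=.
  rewrite (pair_big_dep xpredT (fun B C : {set 'I_n} => (C \in D) && (B \subset C)) (fun B C => Qp (B, C))) /=.
  apply: eq_bigl => -[B C] /=.
  case CD: (C \in D); case BC: (B \subset C); rewrite ?andbF ?andbT //=.
  by rewrite (Dclosed BC CD).
rewrite E1 E2 (bigID (fun p : {set 'I_n} * {set 'I_n} => p.2 \in D) (fun p : {set 'I_n} * {set 'I_n} => (p.1 \in D) && (p.1 \subset p.2))) /=.
rewrite addrC addrK; apply: eq_bigl => -[B C] /=.
rewrite /bier_face /= properEneq.
case BD: (B \in D); case CD: (C \in D); rewrite ?andbF ?andbT //=.
case: (eqVneq B C) => [EBC|_] //=; by rewrite EBC CD in BD.
Qed.

Lemma coef_count (F : {set 'I_n} -> nat) i :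
  (\sum_(B in D) 'X^(F B))`_i = (#|[set B in D | F B == i]|)%:Z.
Proof.
rewrite coef_sum.
rewrite (eq_bigr (fun B => if F B == i then 1 else 0)); last first.
  by move=> B _; rewrite coefXn eq_sym; case: eqP.
rewrite -big_mkcondr sumr_const natz; congr Posz.
by apply: eq_card => B; rewrite !inE.
Qed.

Lemma g_formula i : (i <= n.-1)%N ->
  bier_g D i = (#|[set B in D | #|B| == i]|)%:Z - (#|[set B in D | (n - #|B|)%N == i]|)%:Z.
Proof.
move=> hi; rewrite g_coef // face_decomp coefB.
by rewrite (coef_count (fun B => #|B|)) (coef_count (fun B => n - #|B|)%N).
Qed.

End Bier.

Lemma f1_eq n (D : {set {set 'I_n}}) : (2 <= n)%N ->
  bier_g D 0 = 1 -> bier_g D 1 = n%:Z -> bier_f D 1 = (2 * n)%N.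
Proof.
case: n D => [|[|n']] D // _.
rewrite /bier_g /bier_h /= !big_mkord.
rewrite !big_ord_recl !big1 /=; first last.
- move=> j _; rewrite /bump !leq0n !add1n bin_small ?mul0r ?mulr0 //; have := ltn_ord j; lia.
- move=> j _; rewrite /bump !leq0n !add1n bin_small ?mul0r ?mulr0 //; have := ltn_ord j; lia.
rewrite /bump !leq0n !add1n !subn0 binn !subn1 /=.
rewrite (bin_small (ltnSn n')) binn binSn !(expr0, expr1, expr2).
move=> h0 h1; lia.
Qed.

Close Scope ring_scope.

Theorem corollary13 (n k : nat) (f : nat -> nat) :
  2 <= n -> 1 <= k -> k <= (n.-1)./2 ->
  f 0 = 1 -> f 1 = n -> K_sequence k f ->
  exists D : {set {set 'I_n}},
    [/\ Bn_proper_ideal D,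
        bier_f D 1 = (2 * n)%N,
        (forall i, i <= k -> bier_g D i = Posz (f i))
      & (forall i, k < i <= (n.-1)./2 -> bier_g D i = 0%R)].
Proof.
move=> n2 k1 kn f0 f1 [m [K [[Kne Kcl] [Kcard Ksize]]]].
pose V := [set v : 'I_m | [set v] \in K].
have Kvert : forall B v, B \in K -> v \in B -> v \in V.
  move=> B v BK vB; rewrite inE; apply: (Kcl _ B) => //; by rewrite sub1set.
have cardV : #|V| = n.
  rewrite -f1 -Kcard //.
  have -> : [set A in K | #|A| == 1%N] = [set [set v] | v in V].
    apply/setP => A; rewrite !inE; apply/andP/imsetP.
      by move=> [AK /cards1P [x Ax]]; exists x => //; rewrite inE -Ax.
    by move=> [x xV ->]; rewrite cards1; split => //; rewrite inE in xV.
  by rewrite card_imset //; apply: set1_inj.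
pose h := fun i : 'I_n => @enum_val _ (mem V) (cast_ord (esym cardV) i).
have hinj : injective h.
  by move=> i j /enum_val_inj /cast_ord_inj.
have hV : forall i, h i \in V by move=> i; apply: enum_valP.
have hsurj : forall v, v \in V -> exists i, h i = v.
  move=> v vV; exists (cast_ord cardV (enum_rank_in vV v)).
  by rewrite /h cast_ordK enum_rankK_in.
pose D := [set A : {set 'I_n} | [set h x | x in A] \in K].
have Dclosed : forall B C : {set 'I_n}, B \subset C -> C \in D -> B \in D.
  move=> B C BC; rewrite !inE => CK; apply: Kcl CK; exact: imsetS.
have Dsize : forall A, A \in D -> (#|A| <= k)%N.
  by move=> A; rewrite inE => AK; rewrite -(card_imset _ hinj); apply: Ksize.
have Dcard : forall i, #|[set A in D | #|A| == i]| = #|[set B in K | #|B| == i]|.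
  move=> i.
  have -> : [set B in K | #|B| == i] =
            [set [set h x | x in A] | A : {set 'I_n} in [set A in D | #|A| == i]].
    apply/setP => B; rewrite !inE; apply/andP/imsetP.
      move=> [BK Bi].
      have HB : [set h x | x in h @^-1: B] = B.
        apply/setP => v; apply/imsetP/idP.
          by move=> [x]; rewrite inE => hx ->.
        move=> vB; have [x hx] := hsurj v (Kvert B v BK vB).
        by exists x; rewrite // inE hx.
      exists (h @^-1: B) => //.
      by rewrite !inE HB BK /= -(card_imset _ hinj) HB.
    move=> [A]; rewrite !inE => /andP[AD Ai] ->.
    by rewrite AD (card_imset _ hinj).
  by rewrite card_imset //; apply: imset_inj.
have kltn : (k < n)%N by lia.
have hf : forall i, (i <= (n.-1)./2)%N -> bier_g D i = Posz #|[set A in D | #|A| == i]|.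
  move=> i hi; rewrite g_formula //; last by lia.
  suff -> : [set B in D | (n - #|B|)%N == i] = set0 by rewrite cards0 subr0.
  apply/setP => B; rewrite !inE; apply/andP => -[BD /eqP Bi].
  have := Dsize B; rewrite inE => /(_ BD); lia.
have g0 : bier_g D 0 = 1 by rewrite hf // Dcard Kcard // f0.
have g1 : bier_g D 1 = Posz n by rewrite hf ?Dcard ?Kcard ?f1 //; lia.
exists D; split.
- split.
  + apply/set0Pn; exists set0; rewrite inE imset0.
    have [A AK] := set0Pn _ Kne; apply: Kcl AK; exact: sub0set.
  + exact: Dclosed.
  + apply/negP => /Dsize; rewrite cardsT card_ord; lia.
- exact: f1_eq.
- move=> i ik; rewrite hf; last by lia.
  by rewrite Dcard Kcard.
- move=> i /andP[ki ik]; rewrite hf //.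
  suff -> : [set A in D | #|A| == i] = set0 by rewrite cards0.
  apply/setP => B; rewrite !inE; apply/andP => -[BD /eqP Bi].
  have := Dsize B; rewrite inE => /(_ BD); lia.
Qed.
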